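(* Let $D\ge 1$, $n_1,\dots,n_D\ge 1$, let $\mathcal{X}\in\mathbb{R}^{n_1\times\cdots\times n_D}$, let $\gamma\ge 0$, and for each $d\in\{1,\dots,D\}$ let $W_d=\{w_{d,ij}\}_{1\le i<j\le n_d}$ be a collection of nonnegative weights. Define, for $\mathcal{U}\in\mathbb{R}^{n_1\times\cdots\times n_D}$, $$F_\gamma(\mathcal{U})=\frac12\|\mathcal{X}-\mathcal{U}\|_F^2+\gamma\sum_{d=1}^D\sum_{1\le i<j\le n_d} w_{d,ij}\,\|\mathcal{U}\times_d\Delta_{d,ij}\|_F .$$ Then $F_\gamma$ has a unique minimizer $\widehat{\mathcal{U}}$, and the map $(\mathcal{X},\gamma,W_1,\dots,W_D)\mapsto\widehat{\mathcal{U}}$ is jointly continuous (on the set where $\gamma\ge0$ and all weights are nonnegative).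
   Context: $\|\cdot\|_F$ is the square root of the sum of squares of all entries of a tensor. For a tensor $\mathcal{A}\in\mathbb{R}^{n_1\times\cdots\times n_D}$ and a matrix $B\in\mathbb{R}^{m\times n_d}$, the $d$-mode product $\mathcal{A}\times_d B$ is the tensor of size $n_1\times\cdots\times n_{d-1}\times m\times n_{d+1}\times\cdots\times n_D$ with entries $(\mathcal{A}\times_d B)_{i_1\ldots i_{d-1} j i_{d+1}\ldots i_D}=\sum_{i_d=1}^{n_d}a_{i_1\ldots i_D}b_{j i_d}$. Here $\Delta_{d,ij}=e_i^\top-e_j^\top\in\mathbb{R}^{1\times n_d}$, where $e_i$ is the $i$th standard basis vector of $\mathbb{R}^{n_d}$; thus $\mathcal{U}\times_d\Delta_{d,ij}$ is the difference of the $i$th and $j$th mode-$d$ subarrays of $\mathcal{U}$ (the subarrays obtained by fixing the $d$th index to $i$, respectively $j$). *)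

(* Defs.v *)
From HB Require Import structures.
From mathcomp Require Import all_boot all_order all_algebra.
From mathcomp Require Import reals.
Set Implicit Arguments. Unset Strict Implicit. Unset Printing Implicit Defensive.
Import Order.TTheory GRing.Theory Num.Theory.
Local Open Scope ring_scope.

Definition Idx (D : nat) (n : 'I_D -> nat) : finType :=
  {dffun forall d : 'I_D, 'I_(n d)}.

Definition tensor (R : realType) (D : nat) (n : 'I_D -> nat) :=
  {ffun Idx n -> R}.

(* Weights w_{d,ij}; only the entries with i < j are used. *)
Definition weights (R : realType) (D : nat) (n : 'I_D -> nat) :=
  forall d : 'I_D, 'I_(n d) -> 'I_(n d) -> R.

Definition weights_nonneg (R : realType) (D : nat) (n : 'I_D -> nat)
  (w : weights R n) : Prop :=
  forall (d : 'I_D) (i j : 'I_(n d)), (i < j)%N -> 0 <= w d i j.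

Definition frob (R : realType) (D : nat) (n : 'I_D -> nat) (U : tensor R n) : R :=
  Num.sqrt (\sum_(k : Idx n) U k ^+ 2).

(* || U x_d Delta_{d,ij} ||_F : Frobenius norm of the difference between the
   i-th and j-th mode-d subarrays of U.  An entry of U x_d Delta_{d,ij} is
   indexed by the coordinates other than d; it pairs the index k of the i-th
   subarray (k d = i) with the index k' of the j-th subarray (k' d = j) that
   agrees with k in all coordinates e <> d. *)
Definition mode_diff_norm (R : realType) (D : nat) (n : 'I_D -> nat)
  (U : tensor R n) (d : 'I_D) (i j : 'I_(n d)) : R :=
  Num.sqrt (\sum_(k : Idx n) \sum_(k' : Idx n |
      [&& k d == i, k' d == j & [forall e : 'I_D, (e != d) ==> (k e == k' e)]])
      (U k - U k') ^+ 2).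

Arguments mode_diff_norm {R D n} U d i j.

Definition Fobj (R : realType) (D : nat) (n : 'I_D -> nat)
  (X : tensor R n) (gamma : R) (w : weights R n) (U : tensor R n) : R :=
  2^-1 * frob [ffun k => X k - U k] ^+ 2
  + gamma * \sum_(d : 'I_D) \sum_(i : 'I_(n d)) \sum_(j : 'I_(n d) | (i < j)%N)
              w d i j * mode_diff_norm U d i j.

Definition unique_minimizer (T R : Type) (le : R -> R -> bool) (F : T -> R) (U : T) : Prop :=
  (forall V, le (F U) (F V)) /\ (forall V, (forall V', le (F V) (F V')) -> V = U).

(* Main.v *)
Require Import Defs.
From HB Require Import structures.
From mathcomp Require Import all_boot all_order all_algebra.
From mathcomp Require Import reals.
From mathcomp Require Import reals ring lra.
From mathcomp Require Import mathcomp_extra classical_sets boolp topology normedtype realfun function_spaces derive.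
Import Order.TTheory GRing.Theory Num.Theory.
Local Open Scope ring_scope.
Import numFieldNormedType.Exports.
Section B.
Variable R : realType.
Variable T : topologicalType.
Lemma cont_add (f g : T -> R) : continuous f -> continuous g -> continuous (fun x => f x + g x).
Proof. move=> hf hg x; exact: (continuousD (hf x) (hg x)). Qed.
Lemma cont_mul (f g : T -> R) : continuous f -> continuous g -> continuous (fun x => f x * g x).
Proof. move=> hf hg x; exact: (continuousM (hf x) (hg x)). Qed.
Lemma cont_sqrt (f : T -> R) : continuous f -> continuous (fun x => Num.sqrt (f x)).
Proof. move=> hf x; apply: continuous_comp (hf x) _; exact: sqrt_continuous. Qed.
Lemma cont_cst (c : R) : continuous (fun _ : T => c).
Proof. exact: cst_continuous. Qed.
Lemma cont_sq (f : T -> R) : continuous f -> continuous (fun x => f x ^+ 2).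
Proof.
move=> hf; have -> : (fun x => f x ^+ 2) = (fun x => f x * f x).
  by apply: funext => x; rewrite expr2.
exact: cont_mul.
Qed.
Lemma cont_sub (f g : T -> R) : continuous f -> continuous g -> continuous (fun x => f x - g x).
Proof.
move=> hf hg; apply: cont_add => //.
have -> : (fun x => - g x) = (fun x => (-1) * g x) by apply: funext => x; rewrite mulN1r.
apply: cont_mul => //; exact: cont_cst.
Qed.
Lemma cont_sum (I : finType) (P : pred I) (F : I -> T -> R) :
  (forall i, continuous (F i)) -> continuous (fun x => \sum_(i | P i) F i x).
Proof.
move=> hF.
suff : forall s : seq I, continuous (fun x => \sum_(i <- s | P i) F i x) by apply.
elim => [|a s IH].
  have -> : (fun x => \sum_(i <- [::] | P i) F i x) = (fun _ => 0) by apply: funext => x; rewrite big_nil.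
  exact: cont_cst.
have -> : (fun x => \sum_(i <- a :: s | P i) F i x) =
   (fun x => if P a then F a x + \sum_(i <- s | P i) F i x else \sum_(i <- s | P i) F i x).
  by apply: funext => x; rewrite big_cons.
by case: (P a) => //; apply: cont_add.
Qed.
End B.

Section A.
Variable R : realType.

Lemma cauchy_schwarz (I : finType) (P : pred I) (x y : I -> R) :
  (\sum_(i | P i) x i * y i)^+2 <= (\sum_(i | P i) x i ^+ 2) * (\sum_(i | P i) y i ^+ 2).
Proof.
set A := \sum_(i | P i) x i ^+ 2; set B := \sum_(i | P i) y i ^+ 2.
set C := \sum_(i | P i) x i * y i.
have B0 : 0 <= B by apply: sumr_ge0 => i _; exact: sqr_ge0.
have A0 : 0 <= A by apply: sumr_ge0 => i _; exact: sqr_ge0.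
have [Bz|Bp] := eqVneq B 0.
  have y0 : forall i, P i -> y i = 0.
    move=> i Pi; apply/eqP; rewrite -sqrf_eq0; apply/eqP.
    exact: (psumr_eq0P (fun i _ => sqr_ge0 (y i)) Bz).
  have -> : C = 0 by rewrite /C big1 // => i Pi; rewrite y0 // mulr0.
  by rewrite expr0n /= Bz mulr0.
have Bpos : 0 < B by rewrite lt_def Bp B0.
have H : 0 <= \sum_(i | P i) (B * x i - C * y i) ^+ 2 by apply: sumr_ge0 => i _; exact: sqr_ge0.
have E : \sum_(i | P i) (B * x i - C * y i) ^+ 2 = B^+2 * A - 2 * B * C * C + C^+2 * B.
  rewrite (eq_bigr (fun i => B^+2 * x i ^+ 2 - (2 * B * C) * (x i * y i) + C^+2 * y i ^+ 2)); last first.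
    by move=> i _; ring.
  by rewrite big_split sumrB /= -!mulr_sumr.
rewrite E in H.
nra.
Qed.

Lemma minkowski (I : finType) (P : pred I) (x y : I -> R) (a b : R) :
  0 <= a -> 0 <= b ->
  Num.sqrt (\sum_(i | P i) (a * x i + b * y i)^+2) <=
  a * Num.sqrt (\sum_(i | P i) x i ^+ 2) + b * Num.sqrt (\sum_(i | P i) y i ^+ 2).
Proof.
move=> a0 b0.
set A := \sum_(i | P i) x i ^+ 2; set B := \sum_(i | P i) y i ^+ 2.
set C := \sum_(i | P i) x i * y i.
have B0 : 0 <= B by apply: sumr_ge0 => i _; exact: sqr_ge0.
have A0 : 0 <= A by apply: sumr_ge0 => i _; exact: sqr_ge0.
have CS : C ^+ 2 <= A * B by exact: cauchy_schwarz.
have sA := sqrtr_ge0 A; have sB := sqrtr_ge0 B.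
have sA2 := sqr_sqrtr A0; have sB2 := sqr_sqrtr B0.
have CC : C <= Num.sqrt A * Num.sqrt B.
  have : C ^+ 2 <= (Num.sqrt A * Num.sqrt B) ^+ 2 by rewrite exprMn sA2 sB2.
  have s0 : 0 <= Num.sqrt A * Num.sqrt B by exact: mulr_ge0.
  move: s0; set s := Num.sqrt A * Num.sqrt B => s0 h.
  rewrite leNgt; apply/negP => hC.
  have : s ^+ 2 < C ^+ 2 by rewrite ltr_pXn2r // nnegrE //; apply: (le_trans s0); exact: ltW.
  by rewrite ltNge h.
have E : \sum_(i | P i) (a * x i + b * y i)^+2 = a^+2 * A + 2 * a * b * C + b^+2 * B.
  rewrite (eq_bigr (fun i => a^+2 * x i ^+ 2 + (2 * a * b) * (x i * y i) + b^+2 * y i ^+ 2)); last first.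
    by move=> i _; ring.
  by rewrite !big_split /= -!mulr_sumr.
rewrite E.
have R0 : 0 <= a * Num.sqrt A + b * Num.sqrt B by nra.
rewrite -(ger0_norm R0) -sqrtr_sqr ler_sqrt; last exact: sqr_ge0.
have ab : 0 <= a * b by exact: mulr_ge0.
move: CC sA2 sB2 ab; set sa := Num.sqrt A; set sb := Num.sqrt B => CC <- <- ab.
have : 0 <= 2 * (a * b) * (sa * sb - C) by apply: mulr_ge0; [apply: mulr_ge0|rewrite subr_ge0].
move=> h; lra.
Qed.
Variables (D : nat) (n : 'I_D -> nat).
Local Notation tensor := (tensor R n).
Local Notation mdn := mode_diff_norm.
Implicit Types (U V X c : tensor) (w : weights R n) (g : R).

Lemma mdn_convex (U V : tensor) d i j a b : 0 <= a -> 0 <= b ->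
  mdn ([ffun k => a * U k + b * V k] : tensor) d i j <= a * mdn U d i j + b * mdn V d i j.
Proof.
move=> a0 b0; rewrite /mode_diff_norm !pair_big_dep /=.
rewrite (eq_bigr (fun p => (a * (U p.1 - U p.2) + b * (V p.1 - V p.2))^+2)); last first.
  by move=> p _; rewrite !ffunE; congr (_ ^+ 2); ring.
exact: minkowski.
Qed.
Definition pen (w : weights R n) (U : tensor) : R :=
  \sum_(d : 'I_D) \sum_(i : 'I_(n d)) \sum_(j : 'I_(n d) | (i < j)%N) w d i j * mdn U d i j.
Definition q (X U : tensor) : R := \sum_k (X k - U k) ^+ 2.

Lemma q_ge0 X U : 0 <= q X U.
Proof. by apply: sumr_ge0 => k _; exact: sqr_ge0. Qed.

Lemma FobjE X g w U : Fobj X g w U = 2^-1 * q X U + g * pen w U.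
Proof.
rewrite /Fobj /frob sqr_sqrtr; last by apply: sumr_ge0 => k _; exact: sqr_ge0.
by congr (_ * _ + _); apply: eq_bigr => k _; rewrite ffunE.
Qed.

Lemma mdn_ge0 U d i j : 0 <= mdn U d i j.
Proof. exact: sqrtr_ge0. Qed.

Lemma pen_ge0 w U : weights_nonneg w -> 0 <= pen w U.
Proof.
move=> wn; apply: sumr_ge0 => d _; apply: sumr_ge0 => i _; apply: sumr_ge0 => j ij.
by apply: mulr_ge0; [exact: wn|exact: mdn_ge0].
Qed.

Lemma pen_convex w U V a b : weights_nonneg w -> 0 <= a -> 0 <= b ->
  pen w ([ffun k => a * U k + b * V k] : tensor) <= a * pen w U + b * pen w V.
Proof.
move=> wn a0 b0; rewrite /pen !mulr_sumr -big_split /=; apply: ler_sum => d _.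
rewrite !mulr_sumr -big_split /=; apply: ler_sum => i _.
rewrite !mulr_sumr -big_split /=; apply: ler_sum => j ij.
have w0 := wn d i j ij.
have h := ler_wpM2l w0 (mdn_convex U V d i j a b a0 b0).
apply: (le_trans h).
by rewrite mulrDr !mulrA [w d i j * a]mulrC [w d i j * b]mulrC.
Qed.

Definition d2 (U V : tensor) : R := \sum_k (U k - V k) ^+ 2.

Lemma d2_ge0 U V : 0 <= d2 U V.
Proof. by apply: sumr_ge0 => k _; exact: sqr_ge0. Qed.

Lemma d2C U V : d2 U V = d2 V U.
Proof. by apply: eq_bigr => k _; rewrite -sqrrN opprB. Qed.

Lemma d2_term U V k : (U k - V k) ^+ 2 <= d2 U V.
Proof.
rewrite /d2 (bigD1 k) //= lerDl; apply: sumr_ge0 => i _; exact: sqr_ge0.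
Qed.

Lemma F_mid X g w U V : 0 <= g -> weights_nonneg w ->
  Fobj X g w ([ffun k => 2^-1 * U k + 2^-1 * V k] : tensor) <=
  2^-1 * Fobj X g w U + 2^-1 * Fobj X g w V - 8^-1 * d2 U V.
Proof.
move=> g0 wn; rewrite !FobjE.
have hq : q X ([ffun k => 2^-1 * U k + 2^-1 * V k] : tensor) =
    2^-1 * q X U + 2^-1 * q X V - 4^-1 * d2 U V.
  rewrite /q /d2 !mulr_sumr -!big_split -sumrB /=; apply: eq_bigr => k _.
  rewrite ffunE; field; lra.
have h2 : 0 <= 2^-1 :> R by rewrite invr_ge0.
have hp := pen_convex w U V (2^-1) (2^-1) wn h2 h2.
have hp' : g * pen w ([ffun k => 2^-1 * U k + 2^-1 * V k] : tensor) <=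
   g * (2^-1 * pen w U + 2^-1 * pen w V) by exact: ler_wpM2l.
rewrite hq; lra.
Qed.

Lemma strong X g w c : 0 <= g -> weights_nonneg w ->
  (forall V, Fobj X g w c <= Fobj X g w V) ->
  forall V, 4^-1 * d2 V c <= Fobj X g w V - Fobj X g w c.
Proof.
move=> g0 wn cmin V.
have h1 := F_mid X g w V c g0 wn.
have h2 := cmin ([ffun k => 2^-1 * V k + 2^-1 * c k] : tensor).
lra.
Qed.
Lemma term_le_sum (I : finType) (f : I -> R) (k : I) :
  (forall i, 0 <= f i) -> f k <= \sum_i f i.
Proof. by move=> f0; rewrite (bigD1 k) //= lerDl; apply: sumr_ge0. Qed.

Lemma sum_filter_le (I : finType) (P : pred I) (f : I -> R) :
  (forall i, 0 <= f i) -> \sum_(i | P i) f i <= \sum_i f i.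
Proof.
move=> f0; rewrite big_mkcond /=; apply: ler_sum => i _; case: (P i) => //.
Qed.

Lemma norm_sumB_le (I : finType) (P : pred I) (F G H : I -> R) :
  (forall i, P i -> `|F i - G i| <= H i) ->
  `|\sum_(i | P i) F i - \sum_(i | P i) G i| <= \sum_(i | P i) H i.
Proof.
move=> h; rewrite -sumrB; apply: (le_trans (ler_norm_sum _ _ _)); exact: ler_sum.
Qed.

Definition z0 : tensor := [ffun => 0].

Lemma F_z0 X g w : Fobj X g w z0 = 2^-1 * \sum_k X k ^+ 2.
Proof.
have hp : pen w z0 = 0.
  rewrite /pen big1 // => d _; rewrite big1 // => i _; rewrite big1 // => j _.
  rewrite /mode_diff_norm big1 ?sqrtr0 ?mulr0 // => k _; rewrite big1 // => k' _.
  by rewrite !ffunE subrr expr0n.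
rewrite FobjE hp mulr0 addr0 /q.
by congr (_ * _); apply: eq_bigr => k _; rewrite ffunE subr0.
Qed.

Lemma F_ge X g w U : 0 <= g -> weights_nonneg w -> 2^-1 * q X U <= Fobj X g w U.
Proof.
move=> g0 wn; rewrite FobjE lerDl; apply: mulr_ge0 => //; exact: pen_ge0.
Qed.

Lemma min_bound X g w c : 0 <= g -> weights_nonneg w ->
  (forall V, Fobj X g w c <= Fobj X g w V) ->
  forall k, (X k - c k) ^+ 2 <= \sum_k X k ^+ 2.
Proof.
move=> g0 wn cmin k.
have h1 := F_ge X g w c g0 wn. have h2 := cmin z0. rewrite F_z0 in h2.
have h3 : (X k - c k) ^+ 2 <= q X c by exact: d2_term.
lra.
Qed.

Definition Q0 X0 : R := \sum_k (`|X0 k| + 1) ^+ 2.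
Definition Bd X0 : R := 1 + 2 * Q0 X0.

Lemma Q0_ge0 X0 : 0 <= Q0 X0.
Proof. by apply: sumr_ge0 => k _; exact: sqr_ge0. Qed.

Lemma Bd_ge0 X0 : 0 <= Bd X0.
Proof. have := Q0_ge0 X0; rewrite /Bd; lra. Qed.

Lemma min_bound2 X0 X g w c : 0 <= g -> weights_nonneg w ->
  (forall k, `|X k - X0 k| <= 1) ->
  (forall V, Fobj X g w c <= Fobj X g w V) ->
  forall k, `|c k| <= Bd X0.
Proof.
move=> g0 wn hX cmin k.
have hXk : forall k, `|X k| <= `|X0 k| + 1.
  move=> i; have := ler_normD (X i - X0 i) (X0 i); rewrite subrK.
  have := hX i; lra.
have hS : \sum_k X k ^+ 2 <= Q0 X0.
  apply: ler_sum => i _; rewrite -real_normK ?num_real //.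
  rewrite ler_pXn2r ?nnegrE //; last by apply: addr_ge0.
have h1 := min_bound X g w c g0 wn cmin k.
have hQ := Q0_ge0 X0.
have h0k : `|X0 k| + 1 <= Q0 X0.
  have h := term_le_sum _ (fun i => (`|X0 i| + 1) ^+ 2) k (fun i => sqr_ge0 _).
  rewrite /= -/(Q0 X0) in h; apply: le_trans h.
  have : 0 <= `|X0 k| := normr_ge0 _.
  move=> h; nra.
have hd : `|X k - c k| <= 1 + Q0 X0.
  have e : (X k - c k) ^+ 2 = `|X k - c k| ^+ 2 by rewrite real_normK ?num_real.
  rewrite e in h1.
  have : 0 <= `|X k - c k| := normr_ge0 _.
  move: h1; set s := `|X k - c k| => h1 h2; nra.
have := ler_normD (X k) (- (X k - c k)); rewrite opprB addrC subrK distrC.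
have := hXk k. rewrite /Bd; lra.
Qed.
Lemma scal1 (x x0 v e B : R) : `|x - x0| < e -> e <= 1 -> `|v| <= B ->
  `|2^-1 * ((x - v) ^+ 2 - (x0 - v) ^+ 2)| <= e * (`|x0| + 1 + B).
Proof.
move=> hx he hv.
have E : 2^-1 * ((x - v) ^+ 2 - (x0 - v) ^+ 2) = 2^-1 * ((x - x0) * ((x - x0) + 2 * x0 - 2 * v)) by ring.
rewrite E normrM normrM (ger0_norm (_ : 0 <= 2^-1)) ?invr_ge0 //.
have hN : `|(x - x0) + 2 * x0 - 2 * v| <= `|x - x0| + 2 * `|x0| + 2 * `|v|.
  apply: (le_trans (ler_normB _ _)); rewrite !normrM (ger0_norm (_ : 0 <= 2)) //.
  by rewrite lerD2r; apply: (le_trans (ler_normD _ _)); rewrite normrM (ger0_norm (_ : 0 <= 2)).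
move: hx hN hv (normr_ge0 (x - x0)) (normr_ge0 ((x - x0) + 2 * x0 - 2 * v)) (normr_ge0 x0).
set a := `|x - x0|; set N := `|_ + _ - _|; set b := `|x0|; set c := `|v| => hx hN hv a0 N0 b0.
have h1 : a * N <= e * N by apply: ler_wpM2r => //; exact: ltW.
have h2 : e * N <= e * (1 + 2 * b + 2 * B).
  apply: ler_wpM2l; first by apply: (le_trans a0); exact: ltW.
  lra.
lra.
Qed.

Lemma scal2 (g g0 ww w0 m Mb e : R) : `|g - g0| < e -> `|ww - w0| < e -> e <= 1 ->
  0 <= g0 -> 0 <= w0 -> 0 <= m -> m <= Mb ->
  `|g * (ww * m) - g0 * (w0 * m)| <= e * ((`|w0| + 1 + g0) * Mb).
Proof.
move=> hg hw he g00 w00 m0 mM.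
have E : g * (ww * m) - g0 * (w0 * m) = ((g - g0) * ww + g0 * (ww - w0)) * m by ring.
rewrite E normrM (ger0_norm m0) (ger0_norm w00).
have hA : `|(g - g0) * ww + g0 * (ww - w0)| <= e * (w0 + 1 + g0).
  apply: (le_trans (ler_normD _ _)); rewrite !normrM (ger0_norm g00).
  have hww : `|ww| <= w0 + 1.
    have := ler_normD (ww - w0) w0; rewrite subrK (ger0_norm w00); lra.
  move: hg hw hww (normr_ge0 (g - g0)) (normr_ge0 (ww - w0)) (normr_ge0 ww).
  set a := `|g - g0|; set b := `|ww - w0|; set c := `|ww| => hg hw hww a0 b0 c0.
  have h1 : a * c <= e * (w0 + 1) by apply: ler_pM => //; exact: ltW.
  have h2 : g0 * b <= g0 * e by apply: ler_wpM2l => //; exact: ltW.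
  lra.
have e0 : 0 <= e by apply: (le_trans (normr_ge0 (g - g0))); exact: ltW.
rewrite mulrA; apply: ler_pM => //; exact: normr_ge0.
Qed.

Definition Mb (B : R) : R := 1 + \sum_(k : Idx n) \sum_(k' : Idx n) (2 * B) ^+ 2.

Lemma mdn_le_Mb U B d i j : (forall k, `|U k| <= B) -> mdn U d i j <= Mb B.
Proof.
move=> hU; rewrite /mode_diff_norm /Mb.
set S := \sum_k _.
have S0 : 0 <= S by apply: sumr_ge0 => k _; apply: sumr_ge0 => k' _; exact: sqr_ge0.
have hS : S <= \sum_(k : Idx n) \sum_(k' : Idx n) (2 * B) ^+ 2.
  apply: ler_sum => k _; apply: le_trans (sum_filter_le _ _ (fun k' => (U k - U k') ^+ 2) _) _.
    by move=> k'; exact: sqr_ge0.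
  apply: ler_sum => k' _.
  have h1 := hU k; have h2 := hU k'.
  have ht : `|U k - U k'| <= 2 * B by apply: (le_trans (ler_normB _ _)); lra.
  have ht0 := normr_ge0 (U k - U k').
  rewrite -real_normK ?num_real //.
  move: ht ht0; set t := `|U k - U k'| => ht ht0; nra.
have hs := sqr_sqrtr S0.
have := sqrtr_ge0 S.
move: hs; set s := Num.sqrt S => hs s0.
nra.
Qed.
Definition C1 X0 (B : R) : R := \sum_k (`|X0 k| + 1 + B).
Definition C2 (g0 : R) (w0 : weights R n) (B : R) : R :=
  \sum_(d : 'I_D) \sum_(i : 'I_(n d)) \sum_(j : 'I_(n d) | (i < j)%N)
     ((`|w0 d i j| + 1 + g0) * Mb B).

Lemma diff_bound X0 g0 w0 X g w V B e :
  0 <= g0 -> weights_nonneg w0 -> 0 <= g -> weights_nonneg w -> e <= 1 ->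
  (forall k, `|X k - X0 k| < e) -> `|g - g0| < e ->
  (forall d (i j : 'I_(n d)), (i < j)%N -> `|w d i j - w0 d i j| < e) ->
  (forall k, `|V k| <= B) ->
  `|Fobj X g w V - Fobj X0 g0 w0 V| <= e * (C1 X0 B + C2 g0 w0 B).
Proof.
move=> g00 wn0 gp wn he hX hg hw hV.
rewrite !FobjE.
have E : 2^-1 * q X V + g * pen w V - (2^-1 * q X0 V + g0 * pen w0 V) =
  (2^-1 * q X V - 2^-1 * q X0 V) + (g * pen w V - g0 * pen w0 V) by ring.
rewrite E; apply: (le_trans (ler_normD _ _)); rewrite mulrDr; apply: lerD.
  rewrite /q -mulrBr -sumrB mulr_sumr /C1 mulr_sumr.
  apply: (le_trans (ler_norm_sum _ _ _)); apply: ler_sum => k _.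
  exact: scal1.
have -> : e * C2 g0 w0 B = \sum_(d : 'I_D) \sum_(i : 'I_(n d)) \sum_(j : 'I_(n d) | (i < j)%N)
     e * ((`|w0 d i j| + 1 + g0) * Mb B).
  rewrite /C2 mulr_sumr; apply: eq_bigr => d _; rewrite mulr_sumr; apply: eq_bigr => i _.
  by rewrite mulr_sumr.
rewrite /pen !mulr_sumr; apply: norm_sumB_le => d _.
rewrite !mulr_sumr; apply: norm_sumB_le => i _.
rewrite !mulr_sumr; apply: norm_sumB_le => j ij.
apply: scal2 => //; [exact: hw | exact: wn0 | exact: mdn_ge0 | exact: mdn_le_Mb].
Qed.
Lemma Mb_ge1 B : 1 <= Mb B.
Proof.
rewrite /Mb lerDl; apply: sumr_ge0 => k _; apply: sumr_ge0 => k' _; exact: sqr_ge0.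
Qed.

Lemma argmin_cont X0 g0 w0 eps : 0 <= g0 -> weights_nonneg w0 -> 0 < eps ->
  exists2 delta : R, 0 < delta &
    forall X g w c c0, 0 <= g -> weights_nonneg w ->
      (forall k, `|X k - X0 k| < delta) -> `|g - g0| < delta ->
      (forall d (i j : 'I_(n d)), (i < j)%N -> `|w d i j - w0 d i j| < delta) ->
      (forall V, Fobj X g w c <= Fobj X g w V) ->
      (forall V, Fobj X0 g0 w0 c0 <= Fobj X0 g0 w0 V) ->
      forall k, `|c k - c0 k| < eps.
Proof.
move=> g00 wn0 eps0.
set B := Bd X0.
have B0 : 0 <= B := Bd_ge0 X0.
set C := C1 X0 B + C2 g0 w0 B.
have C0 : 0 <= C.
  apply: addr_ge0.
    by apply: sumr_ge0 => k _; have := normr_ge0 (X0 k); lra.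
  apply: sumr_ge0 => d _; apply: sumr_ge0 => i _; apply: sumr_ge0 => j _.
  apply: mulr_ge0; first by have := normr_ge0 (w0 d i j); lra.
  by have := Mb_ge1 B; lra.
have C4 : 0 < 4 * C + 1 by lra.
exists (Num.min 1 (eps ^+ 2 / (4 * C + 1))).
  rewrite lt_min ltr01 /=; apply: divr_gt0 => //; exact: exprn_gt0.
set e := Num.min _ _.
have e1 : e <= 1 by rewrite /e ge_min lexx.
have e2 : e * (4 * C + 1) <= eps ^+ 2.
  by rewrite -ler_pdivlMr // /e ge_min lexx orbT.
move=> X g w c c0 gp wn hX hg hw cmin c0min k.
have hX1 : forall k, `|X k - X0 k| <= 1 by move=> i; apply: ltW; exact: lt_le_trans (hX i) e1.
have hX01 : forall k, `|X0 k - X0 k| <= 1 by move=> i; rewrite subrr normr0 ler01.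
have bc := min_bound2 X0 X g w c gp wn hX1 cmin.
have bc0 := min_bound2 X0 X0 g0 w0 c0 g00 wn0 hX01 c0min.
have s1 := strong X g w c gp wn cmin c0.
have s2 := strong X0 g0 w0 c0 g00 wn0 c0min c.
have D1 := diff_bound X0 g0 w0 X g w c0 B e g00 wn0 gp wn e1 hX hg hw bc0.
have D2 := diff_bound X0 g0 w0 X g w c B e g00 wn0 gp wn e1 hX hg hw bc.
rewrite -/C ler_norml in D1; rewrite -/C ler_norml in D2.
move/andP: D1 => [D1a D1b]; move/andP: D2 => [D2a D2b].
rewrite d2C in s1.
have t := d2_term c c0 k.
have e0 : 0 < e by rewrite /e lt_min ltr01 /=; apply: divr_gt0 => //; exact: exprn_gt0.
have hd : (c k - c0 k) ^+ 2 < eps ^+ 2 by nra.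
have := normr_ge0 (c k - c0 k).
rewrite -real_normK ?num_real // in hd.
move: hd; set s := `|c k - c0 k| => hd s0; nra.
Qed.

Import ArrowAsProduct.
Lemma exists_min X g w : 0 <= g -> weights_nonneg w ->
  exists c : tensor, forall V, Fobj X g w c <= Fobj X g w V.
Proof.
move=> g0 wn.
set S := \sum_k X k ^+ 2.
have S0 : 0 <= S by apply: sumr_ge0 => k _; exact: sqr_ge0.
set M := 2 * (1 + S).
pose f (u : (Idx n -> R)) := Fobj X g w ([ffun k0 : Idx n => u k0]).
pose A : set (Idx n -> R) := fun u => forall k, `[-M, M]%classic (u k).
have cA : compact A.
  by have := tychonoff (fun _ : Idx n => @segment_compact R (- M) M).
have hA0 : A (fun _ => 0).
  move=> k /=; rewrite in_itv /=; apply/andP; split; rewrite /M; [rewrite oppr_le0|]; lra.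
have A0 : (A !=set0)%classic by exists (fun _ => 0).
have cf : continuous f.
  have -> : f = fun u => 2^-1 * q X ([ffun k0 : Idx n => u k0]) + g * pen w ([ffun k0 : Idx n => u k0]).
    by apply: funext => u; rewrite /f FobjE.
  have cu : forall k, continuous (fun u : (Idx n -> R) => [ffun k0 : Idx n => u k0] k).
    move=> k; have -> : (fun u : (Idx n -> R) => [ffun k0 : Idx n => u k0] k) = proj k.
      by apply: funext => u; rewrite ffunE.
    exact: proj_continuous.
  apply: cont_add; apply: cont_mul; try exact: cont_cst.
    rewrite /q; apply: cont_sum => k; apply: cont_sq; apply: cont_sub => //; exact: cont_cst.
  rewrite /pen; apply: cont_sum => d; apply: cont_sum => i; apply: cont_sum => j.
  apply: cont_mul; first exact: cont_cst.
  rewrite /mode_diff_norm; apply: cont_sqrt; apply: cont_sum => k; apply: cont_sum => k'.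
  by apply: cont_sq; apply: cont_sub.
have [c cA' cmin] := compact_EVT_min A0 cA (@continuous_subspaceT _ _ A f cf).
exists ([ffun k0 : Idx n => c k0]) => V.
have hV : [ffun k0 : Idx n => V k0] = V by apply/ffunP => k; rewrite ffunE.
have [inA|notA] := pselect (A (fun k => V k)).
  by rewrite -hV; apply: cmin; rewrite inE.
have hz : f (fun _ => 0) = Fobj X g w z0 by rewrite /f /z0.
have le0 : Fobj X g w ([ffun k0 : Idx n => c k0]) <= Fobj X g w z0.
  by rewrite -hz; apply: cmin; rewrite inE.
apply: (le_trans le0); rewrite F_z0 -/S.
have [k hk] : exists k, ~ (`[-M, M]%classic (V k)).
  by apply/existsNP.
have hk' : M < `|V k|.
  move: hk; rewrite /= in_itv /= => hk; rewrite ltNge ler_norml; exact/negP.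
have h1 := F_ge X g w V g0 wn.
have h2 := d2_term X V k.
have hXk : X k ^+ 2 <= S by exact: (term_le_sum _ (fun i => X i ^+ 2) k (fun i => sqr_ge0 _)).
have hd : `|V k| <= `|X k| + `|X k - V k|.
  by have := ler_normD (X k) (V k - X k); rewrite addrC subrK distrC.
rewrite -real_normK ?num_real // in hXk.
rewrite -real_normK ?num_real // in h2.
have := normr_ge0 (X k); have := normr_ge0 (X k - V k).
move: hk' hd hXk h2 h1; rewrite /M.
set a := `|X k|; set b := `|X k - V k|; set v := `|V k| => hk' hd hXk h2 h1 b0 a0.
have : d2 X V = q X V by [].
move=> e; rewrite e in h2.
have ha : a <= 1 + S by nra.
have hb : 1 + S <= b by lra.
have hb2 : S <= b ^+ 2 by nra.
lra.
Qed.
End A.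

Theorem proposition4p1 (R : realType) (D : nat) (n : 'I_D -> nat)
  (hD : (0 < D)%N) (hn : forall d : 'I_D, (0 < n d)%N) :
  exists Uhat : tensor R n -> R -> weights R n -> tensor R n,
    (forall (X : tensor R n) (gamma : R) (w : weights R n),
        0 <= gamma -> weights_nonneg w ->
        unique_minimizer (fun a b : R => a <= b) (Fobj X gamma w) (Uhat X gamma w)) /\
    (forall (X0 : tensor R n) (gamma0 : R) (w0 : weights R n),
        0 <= gamma0 -> weights_nonneg w0 ->
        forall eps : R, 0 < eps ->
        exists2 delta : R, 0 < delta &
          forall (X : tensor R n) (gamma : R) (w : weights R n),
            0 <= gamma -> weights_nonneg w ->
            (forall k : Idx n, `|X k - X0 k| < delta) ->
            `|gamma - gamma0| < delta ->
            (forall (d : 'I_D) (i j : 'I_(n d)), (i < j)%N ->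
                `|w d i j - w0 d i j| < delta) ->
            forall k : Idx n, `|Uhat X gamma w k - Uhat X0 gamma0 w0 k| < eps).
Proof.
have ex : forall (X : tensor R n) (g : R) (w : weights R n), exists U : tensor R n,
    0 <= g -> weights_nonneg w -> forall V, Fobj X g w U <= Fobj X g w V.
  move=> X g w; case: (pselect (0 <= g /\ weights_nonneg w)) => [[g0 wn]|h].
    have [c hc] := @exists_min R D n X g w g0 wn; by exists c.
  by exists (@z0 R D n) => g0 wn; exfalso; apply: h.
pose Uhat X g w := proj1_sig (cid (ex X g w)).
have hU : forall X g w, 0 <= g -> weights_nonneg w ->
    forall V, Fobj X g w (Uhat X g w) <= Fobj X g w V.
  by move=> X g w; exact: (proj2_sig (cid (ex X g w))).
exists Uhat; split.
  move=> X g w g0 wn; split; first exact: hU.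
  move=> V hV.
  have s := @strong R D n X g w _ g0 wn (hU X g w g0 wn) V.
  have := hV (Uhat X g w).
  have := @d2_ge0 R D n V (Uhat X g w).
  move: s; set a := d2 _ _ _ _ _ => s h1 h2.
  have a0 : a = 0 by lra.
  apply/ffunP => k.
  have := @psumr_eq0P R (Idx n) xpredT (fun i => (V i - Uhat X g w i) ^+ 2) (fun i _ => sqr_ge0 (V i - Uhat X g w i)) a0 k isT.
  by move/eqP; rewrite sqrf_eq0 subr_eq0 => /eqP.
move=> X0 g0 w0 g00 wn0 eps eps0.
have [e e0 he] := @argmin_cont R D n X0 g0 w0 eps g00 wn0 eps0.
exists e => // X g w gp wn hX hg hw k.
exact: (he X g w (Uhat X g w) (Uhat X0 g0 w0) gp wn hX hg hw (hU X g w gp wn) (hU X0 g0 w0 g00 wn0) k).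
Qed.
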